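(* Let $n\ge 3$ and $a\ge 1$ be integers. (i) Every power of a cycle $C_n^a$ is a TRVG. (ii) $D_n^1$ is a TRVG. (iii) If $a\ge 3$ and $n\ge 2a+8$, then $D_n^a$ is not a TRVG. (iv) If $a\ge 2$ and $n\le 2a+4$, then $D_n^a$ is a TRVG.
   Context: A graph $G$ is a transparent rectangle visibility graph (TRVG) if its vertices can be represented by a collection of pairwise non-overlapping rectangles in the plane whose sides are parallel to the coordinate axes, one per vertex, such that two distinct vertices are adjacent if and only if there is a horizontal or a vertical line intersecting the interiors of both of their rectangles (other rectangles do not block visibility). For integers $n\ge 3$, $a\ge 1$, the $a$-th power of the cycle, $C_n^a$, has vertices $v_1,\dots,v_n$, with $v_i$ and $v_j$ ($i\ne j$) adjacent iff their cyclic distance $\min(|i-j|,\,n-|i-j|)$ is at most $a$. $D_n^a$ denotes the complement of $C_n^a$. *)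

(* Defs.v *)
From Stdlib Require Import Reals.
From mathcomp Require Import all_boot.
Set Implicit Arguments. Unset Strict Implicit. Unset Printing Implicit Defensive.

Record rect := Rect { rx1 : R; rx2 : R; ry1 : R; ry2 : R }.

Definition rect_valid (r : rect) : Prop := Rlt (rx1 r) (rx2 r) /\ Rlt (ry1 r) (ry2 r).

Definition in_interior (r : rect) (p q : R) : Prop :=
  (Rlt (rx1 r) p /\ Rlt p (rx2 r)) /\ (Rlt (ry1 r) q /\ Rlt q (ry2 r)).

Definition non_overlapping (r s : rect) : Prop :=
  ~ (exists p q : R, in_interior r p q /\ in_interior s p q).

Definition hvisible (r s : rect) : Prop :=
  exists c : R, (Rlt (ry1 r) c /\ Rlt c (ry2 r)) /\ (Rlt (ry1 s) c /\ Rlt c (ry2 s)).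

Definition vvisible (r s : rect) : Prop :=
  exists c : R, (Rlt (rx1 r) c /\ Rlt c (rx2 r)) /\ (Rlt (rx1 s) c /\ Rlt c (rx2 s)).

(* A (simple) graph on the finite vertex type V, given by its adjacency
   relation, is a transparent rectangle visibility graph. *)
Definition is_TRVG (V : finType) (adj : V -> V -> Prop) : Prop :=
  exists f : V -> rect,
    (forall v, rect_valid (f v)) /\
    (forall u v, u <> v -> non_overlapping (f u) (f v)) /\
    (forall u v, u <> v -> (adj u v <-> hvisible (f u) (f v) \/ vvisible (f u) (f v))).

Definition cdist (n : nat) (i j : 'I_n) : nat :=
  let d := if (i <= j)%N then (j - i)%N else (i - j)%N in minn d (n - d).

Definition Cpow (n a : nat) (i j : 'I_n) : Prop := i <> j /\ (cdist i j <= a)%N.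

Definition Dpow (n a : nat) (i j : 'I_n) : Prop := i <> j /\ ~ @Cpow n a i j.

(* Main.v *)
Require Import Defs.
From Stdlib Require Import Reals Lra.
From mathcomp Require Import all_boot zify.

Definition cd n u v := let d := if (u <= v)%N then (v - u)%N else (u - v)%N in minn d (n - d).
Definition ovn (f g : nat -> nat) u v := (f u < g v)%N /\ (f v < g u)%N.


Open Scope R_scope.
Lemma vvisP r s : rect_valid r -> rect_valid s ->
  (vvisible r s <-> (Rlt (rx1 r) (rx2 s) /\ Rlt (rx1 s) (rx2 r))).
Proof.
move=> [h1 h2] [h3 h4]; split.
- move=> [c [[? ?] [? ?]]]; split; lra.
- move=> [h5 h6].
  destruct (Rle_dec (rx1 r) (rx1 s)); destruct (Rle_dec (rx2 r) (rx2 s)).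
  + exists ((rx1 s + rx2 r)/2); split; split; lra.
  + exists ((rx1 s + rx2 s)/2); split; split; lra.
  + exists ((rx1 r + rx2 r)/2); split; split; lra.
  + exists ((rx1 r + rx2 s)/2); split; split; lra.
Qed.

Lemma hvisP r s : rect_valid r -> rect_valid s ->
  (hvisible r s <-> (Rlt (ry1 r) (ry2 s) /\ Rlt (ry1 s) (ry2 r))).
Proof.
move=> [h1 h2] [h3 h4]; split.
- move=> [c [[? ?] [? ?]]]; split; lra.
- move=> [h5 h6].
  destruct (Rle_dec (ry1 r) (ry1 s)); destruct (Rle_dec (ry2 r) (ry2 s)).
  + exists ((ry1 s + ry2 r)/2); split; split; lra.
  + exists ((ry1 s + ry2 s)/2); split; split; lra.
  + exists ((ry1 r + ry2 r)/2); split; split; lra.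
  + exists ((ry1 r + ry2 s)/2); split; split; lra.
Qed.

Close Scope R_scope.
Lemma INRlt m k : (Rlt (INR m) (INR k)) <-> (m < k)%N.
Proof. split; [move=> h; apply/ltP; apply: INR_lt h | move/ltP; apply: lt_INR]. Qed.


Lemma build (n : nat) (adj : 'I_n -> 'I_n -> Prop) (X1 X2 Y1 Y2 : nat -> nat) :
  (forall v, (v < n)%N -> (X1 v < X2 v)%N /\ (Y1 v < Y2 v)%N) ->
  (forall (i j : 'I_n), i <> j ->
     (adj i j <-> ovn X1 X2 i j \/ ovn Y1 Y2 i j) /\ ~ (ovn X1 X2 i j /\ ovn Y1 Y2 i j)) ->
  is_TRVG adj.
Proof.
move=> hv hadj.
exists (fun v : 'I_n => Rect (INR (X1 v)) (INR (X2 v)) (INR (Y1 v)) (INR (Y2 v))).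
have hval : forall v : 'I_n, rect_valid (Rect (INR (X1 v)) (INR (X2 v)) (INR (Y1 v)) (INR (Y2 v))).
  move=> v; have [h1 h2] := hv v (ltn_ord v); split; simpl; apply/INRlt; done.
split; first exact: hval.
split.
- move=> u v huv [p [q [[[a1 a2] [a3 a4]] [[b1 b2] [b3 b4]]]]].
  case: (hadj u v huv) => _; apply; simpl in *.
  split; split; apply/INRlt; lra.
- move=> u v huv; rewrite (vvisP _ _ (hval u) (hval v)) (hvisP _ _ (hval u) (hval v)) /=.
  rewrite !INRlt. case: (hadj u v huv) => -> _. by rewrite /ovn; tauto.
Qed.

Definition c1X1 n a v := if v < a then 2*(v+a) else if n - a <= v then 2*(v + 2*a + 1 - n) - 1 else 8*n + 2*v.
Definition c1X2 n a v := if v < a then 2*(v+2*a+1) else if n - a <= v then 2*(v + 2*a + 1 - n) else 8*n + 2*v + 1.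
Definition c1Y1 a v := if v < a then 2*(v+a+1) - 1 else 2*v.
Definition c1Y2 a v := 2*(v+a+1).

Lemma c1_ar n a : 2*a+2 <= n -> 1 <= a -> forall u v, u < n -> v < n -> u <> v ->
  (cd n u v <= a <-> ovn (c1X1 n a) (c1X2 n a) u v \/ ovn (c1Y1 a) (c1Y2 a) u v) /\
  ~ (ovn (c1X1 n a) (c1X2 n a) u v /\ ovn (c1Y1 a) (c1Y2 a) u v).
Proof.
move=> hn ha u v hu hv huv; rewrite /cd /ovn /c1X1 /c1X2 /c1Y1 /c1Y2.
case: (leqP u v) => h1; case: (ltnP u a) => h2; case: (ltnP v a) => h3;
case: (leqP (n - a) u) => h4; case: (leqP (n-a) v) => h5; lia.
Qed.

Definition d1X1 n v := if v == n.-1 then 0 else if v %% 2 == 0 then (if (v == 0) || (v == n - 2) then 7 else 4) else 16 + 4*v.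
Definition d1X2 n v := if v == n.-1 then 6 else if v %% 2 == 0 then 8 + 4*v else 18 + 4*v.
Definition d1Y1 n v := if v == n.-1 then 0 else if v %% 2 == 0 then 16 + 4*v else (if v == n - 2 then 7 else 4).
Definition d1Y2 n v := if v == n.-1 then 6 else if v %% 2 == 0 then 18 + 4*v else 8 + 4*v.

Lemma d1_ar n : 3 <= n -> forall u v, u < n -> v < n -> u <> v ->
  (1 < cd n u v <-> ovn (d1X1 n) (d1X2 n) u v \/ ovn (d1Y1 n) (d1Y2 n) u v) /\
  ~ (ovn (d1X1 n) (d1X2 n) u v /\ ovn (d1Y1 n) (d1Y2 n) u v).
Proof.
move=> hn u v hu hv huv; rewrite /cd /ovn /d1X1 /d1X2 /d1Y1 /d1Y2.
case: (leqP u v) => h1;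
case: (eqVneq u n.-1) => h2; case: (eqVneq v n.-1) => h3;
case: (eqVneq (u %% 2) 0) => h4; case: (eqVneq (v %% 2) 0) => h5;
case: (eqVneq u 0) => h6; case: (eqVneq v 0) => h7;
case: (eqVneq u (n-2)) => h8; case: (eqVneq v (n-2)) => h9; simpl; lia.
Qed.

Definition Rltb (x y : R) : bool := if Rlt_dec x y then true else false.
Lemma RltbP x y : reflect (Rlt x y) (Rltb x y).
Proof. by rewrite /Rltb; case: Rlt_dec => h; constructor. Qed.

Section Count.
Variables (T : finType) (l r : T -> R) (side : T -> bool) (t0 : T).
Hypothesis hlr : forall t, Rlt (l t) (r t).
Definition ovb s t := Rltb (l s) (r t) && Rltb (l t) (r s).
Hypothesis hside : forall s t, s != t -> ovb s t -> side s != side t.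

Definition prec s t := Rltb (l s) (l t) || (~~ Rltb (l t) (l s) && (enum_rank s < enum_rank t)).

Lemma prec_irr s : ~~ prec s s.
Proof. rewrite /prec ltnn andbF orbF. by apply/RltbP; apply: Rlt_irrefl. Qed.

Lemma prec_le {s t} : prec s t -> Rle (l s) (l t).
Proof.
rewrite /prec => /orP [/RltbP h | /andP [/RltbP h _]]; lra.
Qed.

Lemma prec_trans {s t u} : prec s t -> prec t u -> prec s u.
Proof.
rewrite /prec => /orP [/RltbP h1 | /andP [/RltbP h1 h1']] /orP [/RltbP h2 | /andP [/RltbP h2 h2']].
- apply/orP; left; apply/RltbP; lra.
- apply/orP; left; apply/RltbP; lra.
- apply/orP; left; apply/RltbP; lra.
- case: (Rlt_dec (l s) (l u)) => h3; first by apply/orP; left; apply/RltbP.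
  apply/orP; right; apply/andP; split; first by apply/RltbP; lra.
  exact: ltn_trans h1' h2'.
Qed.

Lemma prec_total {s t} : s != t -> prec s t || prec t s.
Proof.
move=> hst; rewrite /prec.
case: (Rlt_dec (l s) (l t)) => h1; first by apply/orP; left; apply/orP; left; apply/RltbP.
case: (Rlt_dec (l t) (l s)) => h2; first by apply/orP; right; apply/orP; left; apply/RltbP.
have -> : Rltb (l t) (l s) = false by apply/RltbP.
have -> : Rltb (l s) (l t) = false by apply/RltbP.
rewrite /=. case: (ltngtP (enum_rank s) (enum_rank t)) => // /val_inj/enum_rank_inj h.
by rewrite h eqxx in hst.
Qed.

Lemma ovb_sym s t : ovb s t = ovb t s.
Proof. by rewrite /ovb andbC. Qed.

Lemma key {v w u} : prec v u -> prec w u -> ovb v u -> ovb w u -> side v = side w -> v = w.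
Proof.
move=> pv pw ov ow hs.
case: (eqVneq v w) => // hvw; exfalso.
have := hside v w hvw; rewrite hs eqxx => /(_ _) h.
suff : ovb v w by move=> /h.
move: (prec_le pv) (prec_le pw) ov ow; rewrite /ovb => a1 a2 /andP [/RltbP b1 /RltbP b2] /andP [/RltbP c1 /RltbP c2].
apply/andP; split; apply/RltbP; lra.
Qed.

Definition Pset := [set p : T * T | [&& ~~ side p.1, side p.2 & ovb p.1 p.2]].

Lemma count_ov : #|Pset| < #|T|.
Proof.
pose later (p : T * T) := if prec p.1 p.2 then p.2 else p.1.
pose F t := #|[set s | prec s t]|.
case: (arg_minnP F (isT : predT t0)) => m _ hmin.
have nom : forall s, ~~ prec s m.
  move=> s; apply/negP => hsm.
  have : F s < F m.
    apply: proper_card; apply/properP; split.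
      by apply/subsetP => w; rewrite !inE => hw; apply: prec_trans hw hsm.
    by exists s; rewrite !inE ?hsm // prec_irr.
  by rewrite ltnNge hmin.
have hinj : {in Pset &, injective later}.
  move=> [p1 p2] [q1 q2]; rewrite !inE /later /= => /and3P [hp1 hp2 op] /and3P [hq1 hq2 oq].
  have np : p1 != p2 by apply/negP => /eqP e; move: hp1; rewrite e hp2.
  have nq : q1 != q2 by apply/negP => /eqP e; move: hq1; rewrite e hq2.
  case: ifP => e1; case: ifP => e2 => h.
  - subst q2; congr pair; apply: key e1 e2 op oq _.
    by move: hp1 hq1; case: (side p1); case: (side q1).
  - by subst q1; rewrite hp2 in hq1.
  - by subst q2; rewrite hq2 in hp1.
  - subst q1; congr pair.
    have e1' : prec p2 p1 by move: (prec_total np); rewrite e1.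
    have e2' : prec q2 p1 by move: (prec_total nq); rewrite e2.
    apply: (key e1' e2'); first (by rewrite ovb_sym); first (by rewrite ovb_sym).
    by move: hp2 hq2; case: (side p2); case: (side q2).
have hsub : [set later p | p in Pset] \subset [set~ m].
  apply/subsetP => u /imsetP [[p1 p2]]; rewrite !inE /later /= => /and3P [hp1 hp2 op] ->.
  have np : p1 != p2 by apply/negP => /eqP e; move: hp1; rewrite e hp2.
  case: ifP => e1; apply/negP => /eqP hm.
  - by move: (nom p1); rewrite -hm e1.
  - have e1' : prec p2 p1 by move: (prec_total np); rewrite e1.
    by move: (nom p2); rewrite -hm e1'.
rewrite -(card_in_imset hinj).
apply: (leq_ltn_trans (subset_leq_card hsub)).
rewrite cardsC1. have : 0 < #|T| by apply/card_gt0P; exists t0.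
by case: #|T|.
Qed.
End Count.
Lemma part3 n a : 3 <= a -> 2*a+8 <= n -> ~ is_TRVG (@Dpow n a).
Proof.
move=> ha hn [f [hval [_ hadj]]].
pose T : finType := (bool * 'I_4)%type.
pose gn (t : T) := if t.1 then a + 4 + t.2 else (t.2 : nat).
have gP : forall t : T, gn t < n by move=> [[] [i hi]]; rewrite /gn /=; lia.
pose g t := Ordinal (gP t).
have gneq : forall s t : T, s != t -> g s <> g t.
  move=> [b [i hi]] [c [j hj]] hst [] e; move/negP: hst; apply.
  rewrite /gn /= in e.
  have [eb eij] : b = c /\ i = j by move: e; case: b; case: c => e; lia.
  subst c j; by rewrite (eq_irrelevance hi hj).
have ar1 : forall s t : T, s.1 = t.1 -> cd n (gn s) (gn t) <= a.
  by move=> [[] [i hi]] [[] [j hj]] //= _; rewrite /cd /gn /=; case: ifP => ?; lia.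
have ar2 : forall s t : T, s.1 <> t.1 -> a < cd n (gn s) (gn t).
  by move=> [[] [i hi]] [[] [j hj]] //= _; rewrite /cd /gn /=; case: ifP => ?; lia.
have hD1 : forall s t : T, Dpow a (g s) (g t) -> s.1 != t.1.
  move=> s t [hne hC]; apply/negP => /eqP e; apply: hC; split; first exact: hne.
  exact: ar1 s t e.
have hD2 : forall s t : T, s.1 != t.1 -> Dpow a (g s) (g t).
  move=> s t hst.
  have nst : s != t by apply: contra hst => /eqP ->.
  split; first exact: gneq.
  move=> [_ hc]; have e : cdist (g s) (g t) = cd n (gn s) (gn t) by [].
  rewrite e in hc; have := ar2 s t (elimN eqP hst); lia.
pose lx t := rx1 (f (g t)); pose rx t := rx2 (f (g t)).
pose ly t := ry1 (f (g t)); pose ry t := ry2 (f (g t)).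
pose side := fun t : T => t.1.
have hlrx : forall t, Rlt (lx t) (rx t) by move=> t; case: (hval (g t)).
have hlry : forall t, Rlt (ly t) (ry t) by move=> t; case: (hval (g t)).
have hsx : forall s t, s != t -> @ovb T lx rx s t -> side s != side t.
  move=> s t hst /andP [/RltbP h1 /RltbP h2]; apply: hD1.
  apply/(hadj _ _ (gneq _ _ hst)); right; apply/vvisP; auto.
have hsy : forall s t, s != t -> @ovb T ly ry s t -> side s != side t.
  move=> s t hst /andP [/RltbP h1 /RltbP h2]; apply: hD1.
  apply/(hadj _ _ (gneq _ _ hst)); left; apply/hvisP; auto.
have cT : #|T| = 8 by rewrite card_prod card_bool card_ord.
have cx := @count_ov T lx rx side (false, ord0) hsx.
have cy := @count_ov T ly ry side (false, ord0) hsy.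
rewrite cT in cx cy.
pose Q := [set p : T * T | ~~ p.1.1 && p.2.1].
have cQ : 16 <= #|Q|.
  have <- : #|[set ((false, ij.1), (true, ij.2)) | ij in [set: 'I_4 * 'I_4]]| = 16.
    rewrite card_imset; first by rewrite cardsT card_prod card_ord.
    by move=> [i j] [i' j'] [-> ->].
  apply: subset_leq_card; apply/subsetP => p /imsetP [[i j] _ ->]; by rewrite inE.
have sQ : Q \subset @Pset T lx rx side :|: @Pset T ly ry side.
  apply/subsetP => [[s t]]; rewrite !inE /= => /andP [hs ht].
  have hst : s.1 != t.1 by move: hs ht; case: (s.1); case: (t.1).
  have nst : s != t by apply: contra hst => /eqP ->.
  have := hD2 s t hst; move/(hadj _ _ (gneq _ _ nst)) => [/hvisP h | /vvisP h].
  - have [h1 h2] := h (hval _) (hval _).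
    apply/orP; right; apply/and3P; split => //; apply/andP; split; exact/RltbP.
  - have [h1 h2] := h (hval _) (hval _).
    apply/orP; left; apply/and3P; split => //; apply/andP; split; exact/RltbP.
have := subset_leq_card sQ; rewrite cardsU => h.
lia.
Qed.

Lemma e0_ar n a : n <= 2*a+1 -> forall u v, u < n -> v < n -> u <> v ->
  (a < cd n u v <-> ovn (fun v => 2*v) (fun v => 2*v+1) u v \/ ovn (fun v => 2*v) (fun v => 2*v+1) u v) /\
  ~ (ovn (fun v => 2*v) (fun v => 2*v+1) u v /\ ovn (fun v => 2*v) (fun v => 2*v+1) u v).
Proof. move=> hn u v hu hv huv; rewrite /cd /ovn; case: (leqP u v) => h1; lia. Qed.

Definition e2X1 a v := if v < a.+1 then 2*v else 2*(v-a.+1).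
Lemma e2_ar n a : n = 2*a+2 -> forall u v, u < n -> v < n -> u <> v ->
  (a < cd n u v <-> ovn (e2X1 a) (fun v => e2X1 a v + 1) u v \/ ovn (fun v => 2*v) (fun v => 2*v+1) u v) /\
  ~ (ovn (e2X1 a) (fun v => e2X1 a v + 1) u v /\ ovn (fun v => 2*v) (fun v => 2*v+1) u v).
Proof. move=> hn u v hu hv huv; rewrite /cd /ovn /e2X1; case: (leqP u v) => h1;
case: (ltnP u a.+1) => h2; case: (ltnP v a.+1) => h3; lia. Qed.

Definition e3X1 a v := if v <= a then 4*v else if v == a.+1 then 0 else if v == 2*a+2 then 2 else 4*(v-a.+1).
Definition e3X2 a v := if v <= a then 4*v+2 else if v == a.+1 then 3 else if v == 2*a+2 then 3 else 4*(v-a.+1)+2.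
Definition e3Y1 a v := if v <= a then 4*v else if v == a.+1 then 4*a+4 else 4*(v-a.+2).
Definition e3Y2 a v := e3Y1 a v + 2.
Lemma e3_ar n a : n = 2*a+3 -> forall u v, u < n -> v < n -> u <> v ->
  (a < cd n u v <-> ovn (e3X1 a) (e3X2 a) u v \/ ovn (e3Y1 a) (e3Y2 a) u v) /\
  ~ (ovn (e3X1 a) (e3X2 a) u v /\ ovn (e3Y1 a) (e3Y2 a) u v).
Proof. move=> hn u v hu hv huv; rewrite /cd /ovn /e3X1 /e3X2 /e3Y2 /e3Y1; case: (leqP u v) => h1;
case: (leqP u a) => h2; case: (leqP v a) => h3;
case: (eqVneq u a.+1) => h4; case: (eqVneq v a.+1) => h5;
case: (eqVneq u (2*a+2)) => h6; case: (eqVneq v (2*a+2)) => h7; simpl; lia. Qed.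


Definition e4X1 m v := if v < m then 4*v+2 else 4*(v-m).
Definition e4X2 m v := e4X1 m v + 3.
Definition e4Y1 m v := if v == 0 then 8*m-5 else if v < m.-1 then 8*v else if v == m.-1 then 8*m-8
  else if v == m then 8 else if v < 2*m-1 then 8*(v-m)+8 else 11.
Definition e4Y2 m v := if v == 0 then 8*m-4 else if v < m.-1 then 8*v+2 else if v == m.-1 then 8*m-4
  else if v == m then 12 else if v < 2*m-1 then 8*(v-m)+10 else 12.

Lemma e4_reg m v : 4 <= m -> v < 2*m ->
  (v = 0 /\ e4X1 m v = 4*v+2 /\ e4X2 m v = 4*v+5 /\ e4Y1 m v = 8*m-5 /\ e4Y2 m v = 8*m-4) \/
      ((0 < v < m.-1) /\ e4X1 m v = 4*v+2 /\ e4X2 m v = 4*v+5 /\ e4Y1 m v = 8*v /\ e4Y2 m v = 8*v+2) \/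
      (v = m.-1 /\ e4X1 m v = 4*v+2 /\ e4X2 m v = 4*v+5 /\ e4Y1 m v = 8*m-8 /\ e4Y2 m v = 8*m-4) \/
      (v = m /\ e4X1 m v = 0 /\ e4X2 m v = 3 /\ e4Y1 m v = 8 /\ e4Y2 m v = 12) \/
      ((m < v < 2*m-1) /\ e4X1 m v = 4*(v-m) /\ e4X2 m v = 4*(v-m)+3 /\ e4Y1 m v = 8*(v-m)+8 /\ e4Y2 m v = 8*(v-m)+10) \/
     (v = 2*m-1 /\ e4X1 m v = 4*(v-m) /\ e4X2 m v = 4*(v-m)+3 /\ e4Y1 m v = 11 /\ e4Y2 m v = 12).
Proof.
move=> hm hv; rewrite /e4X2 /e4X1 /e4Y1 /e4Y2.
case: (eqVneq v 0) => h0.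
  left; repeat case: ifP => ?; lia.
case: (ltnP v m.-1) => h1.
  right; left; repeat case: ifP => ?; lia.
case: (eqVneq v m.-1) => h2.
  do 2 right; left; repeat case: ifP => ?; lia.
case: (eqVneq v m) => h3.
  do 3 right; left; repeat case: ifP => ?; lia.
case: (ltnP v (2*m-1)) => h4.
  do 4 right; left; repeat case: ifP => ?; lia.
do 5 right; repeat case: ifP => ?; lia.
Qed.

Lemma e4_ar n a : 2 <= a -> n = 2*a+4 -> forall u v, u < n -> v < n -> u <> v ->
  (a < cd n u v <-> ovn (e4X1 a.+2) (e4X2 a.+2) u v \/ ovn (e4Y1 a.+2) (e4Y2 a.+2) u v) /\
  ~ (ovn (e4X1 a.+2) (e4X2 a.+2) u v /\ ovn (e4Y1 a.+2) (e4Y2 a.+2) u v).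
Proof.
move=> ha hn u v hu hv huv; rewrite /cd /ovn.
have hm : 4 <= a.+2 by lia.
have hu' : u < 2 * a.+2 by lia.
have hv' : v < 2 * a.+2 by lia.
case: (e4_reg _ _ hm hu') => [H|[H|[H|[H|[H|H]]]]]; move: H => [hu1 [-> [-> [-> ->]]]];
case: (e4_reg _ _ hm hv') => [H|[H|[H|[H|[H|H]]]]]; move: H => [hv1 [-> [-> [-> ->]]]];
case: (leqP u v) => h1; lia.
Qed.

Lemma build_C n a X1 X2 Y1 Y2 :
  (forall v, (v < n)%N -> (X1 v < X2 v)%N /\ (Y1 v < Y2 v)%N) ->
  (forall u v, u < n -> v < n -> u <> v ->
    (cd n u v <= a <-> ovn X1 X2 u v \/ ovn Y1 Y2 u v) /\ ~ (ovn X1 X2 u v /\ ovn Y1 Y2 u v)) ->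
  is_TRVG (@Cpow n a).
Proof.
move=> hv h; apply: (@build n _ X1 X2 Y1 Y2 hv) => i j hij.
have hij' : (i:nat) <> j by move=> e; apply: hij; apply: val_inj.
have [h1 h2] := h i j (ltn_ord i) (ltn_ord j) hij'.
split=> //. have e : cdist i j = cd n i j by [].
rewrite /Cpow e -h1. split; [by case | by move=> ?; split].
Qed.

Lemma build_D n a X1 X2 Y1 Y2 :
  (forall v, (v < n)%N -> (X1 v < X2 v)%N /\ (Y1 v < Y2 v)%N) ->
  (forall u v, u < n -> v < n -> u <> v ->
    (a < cd n u v <-> ovn X1 X2 u v \/ ovn Y1 Y2 u v) /\ ~ (ovn X1 X2 u v /\ ovn Y1 Y2 u v)) ->
  is_TRVG (@Dpow n a).
Proof.
move=> hv h; apply: (@build n _ X1 X2 Y1 Y2 hv) => i j hij.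
have hij' : (i:nat) <> j by move=> e; apply: hij; apply: val_inj.
have [h1 h2] := h i j (ltn_ord i) (ltn_ord j) hij'.
split=> //. have e : cdist i j = cd n i j by [].
rewrite /Dpow /Cpow e -h1. split.
- by move=> [_ hn]; rewrite ltnNge; apply/negP => hc; apply: hn.
- by move=> hc; split=> // -[_ hc']; move: hc; rewrite ltnNge hc'.
Qed.

Lemma c0_ar n a : n <= 2*a+1 -> forall u v, u < n -> v < n -> u <> v ->
  (cd n u v <= a <-> ovn (fun v => 2*v) (fun v => 2*v+1) u v \/ ovn (fun _ => 0) (fun _ => 1) u v) /\
  ~ (ovn (fun v => 2*v) (fun v => 2*v+1) u v /\ ovn (fun _ => 0) (fun _ => 1) u v).
Proof. move=> hn u v hu hv huv; rewrite /cd /ovn; case: (leqP u v) => h1; lia. Qed.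

Lemma part1 n a : 3 <= n -> 1 <= a -> is_TRVG (@Cpow n a).
Proof.
move=> hn ha; case: (leqP n (2*a+1)) => hna.
- apply: (@build_C _ _ (fun v => 2*v) (fun v => 2*v+1) (fun _ => 0) (fun _ => 1)).
  + move=> v _; lia.
  + exact: c0_ar.
- apply: (@build_C _ _ (c1X1 n a) (c1X2 n a) (c1Y1 a) (c1Y2 a)).
  + move=> v _; rewrite /c1X1 /c1X2 /c1Y1 /c1Y2; case: ifP => ?; try case: ifP => ?; lia.
  + apply: c1_ar => //; lia.
Qed.

Lemma part2 n : 3 <= n -> is_TRVG (@Dpow n 1).
Proof.
move=> hn; apply: (@build_D _ _ (d1X1 n) (d1X2 n) (d1Y1 n) (d1Y2 n)).
- move=> v _; rewrite /d1X1 /d1X2 /d1Y1 /d1Y2; repeat case: ifP => ?; lia.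
- exact: d1_ar.
Qed.

Lemma part4 n a : 3 <= n -> 2 <= a -> n <= 2*a+4 -> is_TRVG (@Dpow n a).
Proof.
move=> hn ha hna.
case: (leqP n (2*a+1)) => h1.
  apply: (@build_D _ _ (fun v => 2*v) (fun v => 2*v+1) (fun v => 2*v) (fun v => 2*v+1)).
  + move=> v _; lia.
  + exact: e0_ar.
case: (eqVneq n (2*a+2)) => h2.
  apply: (@build_D _ _ (e2X1 a) (fun v => e2X1 a v + 1) (fun v => 2*v) (fun v => 2*v+1)).
  + move=> v _; lia.
  + exact: e2_ar.
case: (eqVneq n (2*a+3)) => h3.
  apply: (@build_D _ _ (e3X1 a) (e3X2 a) (e3Y1 a) (e3Y2 a)).
  + move=> v _; rewrite /e3X1 /e3X2 /e3Y2 /e3Y1; repeat case: ifP => ?; lia.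
  + exact: e3_ar.
have h4 : n = 2*a+4 by lia.
apply: (@build_D _ _ (e4X1 a.+2) (e4X2 a.+2) (e4Y1 a.+2) (e4Y2 a.+2)).
+ move=> v _; rewrite /e4X2 /e4X1 /e4Y2 /e4Y1; repeat case: ifP => ?; lia.
+ exact: e4_ar.
Qed.

Theorem theorem6 (n a : nat) (hn : (3 <= n)%N) (ha : (1 <= a)%N) :
  is_TRVG (@Cpow n a) /\
  is_TRVG (@Dpow n 1) /\
  ((3 <= a)%N -> (2 * a + 8 <= n)%N -> ~ is_TRVG (@Dpow n a)) /\
  ((2 <= a)%N -> (n <= 2 * a + 4)%N -> is_TRVG (@Dpow n a)).
Proof.
split; first exact: part1.
split; first exact: part2.
split; first by move=> h1 h2; apply: part3.
by move=> h1 h2; apply: part4.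
Qed.
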